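(* There exists $N$ such that for all positive integers $a,b\ge N$ we have $r(a,b)\le \frac{9}{8}$. More precisely, for all such $a,b$, the quotient $$\frac{\phi(c!)}{\phi(a!)\,\phi(b!)},\qquad c=a+b+\left\lfloor\frac{a+b}{8}\right\rfloor,$$ is an integer.
   Context: $\phi$ denotes Euler's totient function. For positive integers $a,b$, $c(a,b)$ is the least positive integer $c$ such that $\phi(a!)\,\phi(b!)$ divides $\phi(c!)$, and $r(a,b)=c(a,b)/(a+b)$. *)

(* Defs.v *)
From mathcomp Require Import all_boot.

(* Main.v *)
Require Import Defs.
From mathcomp Require Import all_boot.
From mathcomp Require Import zify.


Lemma sum_count (s : seq nat) (P B : pred nat) :
  \sum_(i <- s | P i) (B i : nat) = count (fun i => P i && B i) s.
Proof.
elim: s => [|x s IH]; first by rewrite big_nil.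
by rewrite big_cons /= IH; case: (P x); case: (B x).
Qed.

Lemma prime_dvd_fact p n : prime p -> (p %| n`!) = (p <= n).
Proof.
move=> pp; apply/idP/idP; last by move=> le; apply: dvdn_fact; rewrite prime_gt0.
move=> d; rewrite leqNgt; apply/negP => lt.
have : 0 < logn p n`! by rewrite logn_gt0 mem_primes pp fact_gt0 d.
rewrite logn_fact // big1_seq // => k /andP[_ /[!mem_index_iota] /andP[k1 _]].
apply: divn_small; apply: (leq_trans lt); rewrite -{1}(expn1 p).
by apply: leq_pexp2l; [rewrite prime_gt0|].
Qed.

Lemma primes_fact_big (F : nat -> nat) n :
  \sum_(p <- primes n`!) F p = \sum_(p <- iota 0 n.+1 | prime p) F p.
Proof.
rewrite -[in RHS]big_filter; apply: perm_big; apply: uniq_perm.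
- exact: primes_uniq.
- by rewrite filter_uniq // iota_uniq.
move=> p; rewrite mem_primes mem_filter mem_iota fact_gt0 /= add0n ltnS.
by case pp: (prime p) => //=; rewrite prime_dvd_fact.
Qed.

Lemma logn_prod q (s : seq nat) (F : nat -> nat) : (forall i, 0 < F i) ->
  logn q (\prod_(i <- s) F i) = \sum_(i <- s) logn q (F i).
Proof.
move=> Fp; elim: s => [|x s IH]; first by rewrite !big_nil logn1.
rewrite !big_cons lognM ?IH //; last by rewrite prodn_gt0.
Qed.


Lemma logn_prod_seq q (s : seq nat) (F : nat -> nat) : (forall i, i \in s -> 0 < F i) ->
  logn q (\prod_(i <- s) F i) = \sum_(i <- s) logn q (F i).
Proof.
elim: s => [|x s IH] Fp; first by rewrite !big_nil logn1.
rewrite !big_cons lognM ?IH ?Fp ?mem_head // => [i iS|]; first by rewrite Fp // inE iS orbT.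
by rewrite big_seq prodn_cond_gt0 // => i iS; rewrite Fp // inE iS orbT.
Qed.

Lemma vT q n : prime q -> logn q (totient n`!) =
  \sum_(p <- iota 0 n.+1 | prime p) logn q p.-1 + (if q <= n then (logn q n`!).-1 else 0).
Proof.
move=> qp; rewrite totientE ?fact_gt0 // logn_prod_seq; last first.
  move=> i; rewrite mem_primes => /and3P[ip _ _].
  have i1 := prime_gt1 ip; rewrite muln_gt0 expn_gt0 (ltn_trans _ i1) // andbT; lia.
transitivity (\sum_(p <- primes n`!) (logn q p.-1 + (q == p) * (logn p n`!).-1)).
  apply: eq_big_seq => p; rewrite mem_primes => /and3P[pp _ _].
  have p1 := prime_gt1 pp.
  rewrite lognM; [|lia|by rewrite expn_gt0 prime_gt0]. by rewrite lognX (logn_prime _ pp) mulnC.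
rewrite big_split /= !(primes_fact_big (fun p => _)); congr (_ + _).
rewrite (eq_bigr (fun p => (q == p) * (logn q n`!).-1)); last first.
  by move=> p _; case: eqP => // ->.
rewrite -big_distrl sum_count.
rewrite (eq_count (a2 := pred1 q)); last first.
  move=> p /=; case: (eqVneq p q) => [->|ne]; first by rewrite qp ?eqxx.
  by rewrite ?andbF // eq_sym (negbTE ne) andbF.
rewrite count_uniq_mem ?iota_uniq // mem_iota /= add0n ltnS.
by case: (q <= n); rewrite ?mul1n ?mul0n.
Qed.


Definition pic a := count prime (iota 0 a.+1).

Lemma bin_le_exp n m : 'C(n, m) <= 2 ^ n.
Proof.
elim: n m => [|n IH] [|m] //; first by rewrite bin0 expn_gt0.
rewrite binS expnS mul2n -addnn; exact: leq_add.
Qed.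

Lemma coprime_prod_primes y (s : seq nat) : prime y -> y \notin s ->
  coprime y (\prod_(p <- s | prime p) p).
Proof.
move=> py; elim: s => [|x s IH]; first by rewrite big_nil coprimen1.
rewrite inE negb_or => /andP[yx ys]; rewrite big_cons.
case px: (prime x); last exact: IH.
rewrite coprimeMr IH // andbT prime_coprime // dvdn_prime2 //.
Qed.

Lemma prod_primes_dvd (s : seq nat) x : uniq s ->
  (forall p, p \in s -> prime p -> p %| x) -> \prod_(p <- s | prime p) p %| x.
Proof.
elim: s => [|y s IH] /=; first by rewrite big_nil dvd1n.
move=> /andP[ys us] H; rewrite big_cons.
case py: (prime y); last by apply: IH => // p ps; apply: H; rewrite inE ps orbT.
rewrite Gauss_dvd ?coprime_prod_primes // H ?mem_head // IH // => p ps.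
by apply: H; rewrite inE ps orbT.
Qed.

Lemma pow_le_prod L (s : seq nat) : (forall p, p \in s -> L <= p) ->
  L ^ (count prime s) <= \prod_(p <- s | prime p) p.
Proof.
elim: s => [|x s IH] H; first by rewrite big_nil.
have IH2 := IH (fun p ps => H p (@mem_behead _ (x :: s) p ps)).
rewrite big_cons /=; case: (prime x) => /=; last by rewrite add0n.
by rewrite add1n expnS leq_mul // H // mem_head.
Qed.

Lemma pic_le a : pic a <= a.
Proof.
by rewrite /pic /= add0n (leq_trans (count_size _ _)) // size_iota.
Qed.

Lemma cheb_block n m : 0 < n -> 2 ^ m <= n.+1 ->
  m * count prime (iota n.+2 n) <= (n.*2).+1.
Proof.
move=> n0 hm; set t := count prime _.
have hd : \prod_(p <- iota n.+2 n | prime p) p %| 'C((n.*2).+1, n).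
  apply: prod_primes_dvd; first exact: iota_uniq.
  move=> p; rewrite mem_iota => /andP[p1 p2] pp.
  have hb := @bin_fact (n.*2).+1 n ltac:(lia).
  have e : (n.*2).+1 - n = n.+1 by lia.
  rewrite e in hb.
  have : p %| (n.*2).+1`! by rewrite prime_dvd_fact //; lia.
  rewrite -hb Gauss_dvdl // prime_coprime // Euclid_dvdM // !prime_dvd_fact //.
  apply/negP => /orP[] h; lia.
have h1 : (n.+1) ^ t <= 2 ^ (n.*2).+1.
  apply: leq_trans (bin_le_exp _ n).
  apply: leq_trans (dvdn_leq _ hd); last by rewrite bin_gt0 -addnn ltnW // ltnS leq_addr.
  apply: pow_le_prod => p; rewrite mem_iota => /andP[p1 _]; exact: ltnW.
case: t h1 => [|t] h1; first by rewrite muln0.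
have : 2 ^ (m * t.+1) <= 2 ^ (n.*2).+1.
  by rewrite expnM; apply: leq_trans h1; rewrite leq_exp2r.
by rewrite leq_exp2l.
Qed.

Lemma cheb m a : 0 < m -> m * pic a <= m * 2 ^ m.+1 + 3 * a.
Proof.
move=> m0; elim: a {-2}a (leqnn a) => [|A IH] a aA.
  by move: aA; rewrite leqn0 => /eqP ->; rewrite (_ : pic 0 = 0) // muln0.
case: (leqP a (2 ^ m.+1)) => ha.
  have := leq_mul (leqnn m) (leq_trans (pic_le a) ha); lia.
have h2 : 2 ^ m.+1 = 2 * 2 ^ m by rewrite expnS.
have h1 : 1 <= 2 ^ m by rewrite expn_gt0.
set n := a.-1 %/ 2.
have hn : n.*2 < a <= (n.*2).+2 by rewrite /n; lia.
have hm : 2 ^ m <= n.+1 by lia.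
have IHn := IH n.+1 ltac:(lia).
have n0 : 0 < n by lia.
have hb := @cheb_block n m n0 hm.
have ea : a.+1 = n.+2 + n + (a.+1 - (n.+2 + n)) by lia.
have hp : pic a <= pic n.+1 + count prime (iota n.+2 n).
  rewrite /pic ea !iotaD !count_cat add0n.
  have -> : count prime (iota (n.+2 + n) (a.+1 - (n.+2 + n))) = 0.
    have : a.+1 - (n.+2 + n) <= 1 by lia.
    case: (a.+1 - _) => [|[|//]] _; first by [].
    rewrite /= addn0; case pr: (prime _) => //; exfalso.
    have e2 : n.+2 + n = 2 * n.+1 by lia.
    rewrite e2 in pr.
    have := @prime_nt_dvdP 2 _ pr isT; rewrite dvdn_mulr // => /(_ isT) h; lia.
  by rewrite addn0.
have := leq_mul (leqnn m) hp; rewrite mulnDr; lia.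
Qed.


Definition surv r x := count (fun j => coprime (1 + j * r) 210) (iota 1 x).

Fixpoint scan (r s c u n : nat) : bool :=
  if n is n'.+1 then
    let s' := (s + r) %% 210 in let c' := c + coprime s' 210 in
    (c' <= 1 + u.+1 %/ 4) && scan r s' c' u.+1 n'
  else c == 48.

Lemma survS r u : surv r u.+1 = surv r u + coprime (1 + u.+1 * r) 210.
Proof. by rewrite /surv -{1}[u.+1]addn1 iotaD count_cat /= addn0 add1n. Qed.

Lemma scan_ok r n : forall s c u, scan r s c u n -> s = (1 + u * r) %% 210 -> c = surv r u ->
  (forall v, u < v <= u + n -> surv r v <= 1 + v %/ 4) /\ surv r (u + n) = 48.
Proof.
elim: n => [|n IH] s c u /=.
  by move=> /eqP -> _ ->; split => [v|]; rewrite ?addn0 //; lia.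
move=> /andP[h1 h2] hs hc.
have hs2 : (s + r) %% 210 = (1 + u.+1 * r) %% 210.
  by rewrite hs modnDml mulSn addnA [_ + r]addnC addnA [r + 1]addnC.
have hc' : c + coprime ((s + r) %% 210) 210 = surv r u.+1 by rewrite hs2 coprime_modl survS hc.
have [IH1 IH2] := IH _ _ _ h2 hs2 hc'.
split; last by rewrite addnS.
move=> v /andP[uv vu]; case: (eqVneq v u.+1) => [->|ne]; first by rewrite -hc'.
by apply: IH1; rewrite addSnnS; apply/andP; split => //; rewrite ltn_neqAle eq_sym ne uv.
Qed.

Lemma check : all (fun r => ~~ coprime r 210 || scan r 1 0 0 210) (iota 0 210).
Proof. vm_compute. reflexivity. Qed.

Lemma surv_small r : r < 210 -> coprime r 210 ->
  (forall v, v <= 210 -> surv r v <= 1 + v %/ 4) /\ surv r 210 = 48.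
Proof.
move=> r210 cr.
have := allP check r; rewrite mem_iota add0n r210 cr => /(_ isT) hs0.
have hs : scan r 1 0 0 210 by move: hs0; case: (scan _ _ _ _ _).
have [h1 h2] := @scan_ok r 210 1 0 0 hs (erefl _) (erefl _).
split => // v; case: v => [|v] hv; first by [].
by apply: h1; rewrite add0n.
Qed.

Lemma count_shift r t u :
  count (fun j => coprime (1 + j * r) 210) (iota (210 * t + 1) u) = surv r u.
Proof.
rewrite iotaDl count_map; apply: eq_count => j /=.
rewrite -coprime_modl -[in RHS]coprime_modl; congr (coprime _ _).
have -> : 1 + (210 * t + j) * r = t * r * 210 + (1 + j * r) by lia.
by rewrite modnMDl.
Qed.

Lemma surv_period r t u : surv r 210 = 48 -> surv r (210 * t + u) = 48 * t + surv r u.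
Proof.
move=> h48.
have e : forall t u, surv r (210 * t + u) = surv r (210 * t) + surv r u.
  by move=> t2 u2; rewrite {1}/surv iotaD count_cat [1 + _]addnC count_shift.
rewrite e; congr (_ + _); elim: t => [|t IH]; first by [].
by rewrite mulnS addnC e IH h48; lia.
Qed.

Lemma surv_bound r x : r < 210 -> coprime r 210 ->
  surv r x + 4 * (x %/ 210) <= (0 < x) + x %/ 4.
Proof.
move=> r210 cr; have [hs h48] := @surv_small r r210 cr.
have ex : x = 210 * (x %/ 210) + x %% 210 by rewrite mulnC -divn_eq.
have hu : x %% 210 < 210 by rewrite ltn_mod.
have hsu := hs (x %% 210) (ltnW hu).
rewrite ex surv_period //.
case: x ex hu hsu => [|x] ex hu hsu; first by [].
rewrite -ex; lia.
Qed.


Definition Ssum q a := \sum_(p <- iota 0 a.+1 | prime p) logn q p.-1.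
Definition Ck q a k := count (fun p => prime p && (q ^ k %| p.-1)) (iota 0 a.+1).

Lemma sum_count0 (s : seq nat) (B : pred nat) : \sum_(i <- s) (B i : nat) = count B s.
Proof. by elim: s => [|x s IH]; rewrite ?big_nil ?big_cons //= IH. Qed.

Lemma S_le_sumC q a : prime q -> Ssum q a <= \sum_(k <- iota 1 a) Ck q a k.
Proof.
move=> qp; rewrite /Ssum.
apply: (@leq_trans (\sum_(p <- iota 0 a.+1 | prime p) \sum_(k <- iota 1 a) (q ^ k %| p.-1 : nat))).
  rewrite big_seq_cond [X in _ <= X]big_seq_cond; apply: leq_sum => p /andP[pa pp].
  rewrite mem_iota add0n ltnS in pa.
  rewrite logn_count_dvd // /index_iota.
  have e : a = (p.-1 - 1) + (a - (p.-1 - 1)) by lia.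
  by rewrite [in X in _ <= X]e iotaD big_cat leq_addr.
rewrite exchange_big; apply: leq_sum => k _; by rewrite sum_count.
Qed.

Lemma Ck_map q a k (f : pred nat) : 0 < q ^ k ->
  (forall p, prime p -> q ^ k %| p.-1 -> 0 < p.-1 -> f p) ->
  Ck q a k <= count (fun j => f (1 + j * q ^ k)) (iota 1 (a.-1 %/ q ^ k)).
Proof.
move=> m0 hf; rewrite /Ck.
have -> : count (fun j => f (1 + j * q ^ k)) (iota 1 (a.-1 %/ q ^ k)) =
  count f (map (fun j => 1 + j * q ^ k) (iota 1 (a.-1 %/ q ^ k))) by rewrite count_map.
rewrite -!size_filter; apply: uniq_leq_size; first by rewrite filter_uniq // iota_uniq.
move=> p; rewrite mem_filter mem_iota add0n ltnS => /andP[/andP[pp hd] pa].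
have p1 := prime_gt1 pp.
rewrite mem_filter hf //; last by lia.
apply/mapP; exists (p.-1 %/ q ^ k); last by rewrite divnK //; lia.
have hle : q ^ k <= p.-1 by apply: dvdn_leq => //; lia.
rewrite mem_iota; apply/andP; split; first by rewrite divn_gt0.
by rewrite add1n ltnS leq_div2r //; lia.
Qed.

Lemma rhs_le q a : prime q ->
  \sum_(k <- iota 1 a) (a %/ 4) %/ q ^ k <= logn q (a %/ 4)`!.
Proof.
move=> qp; rewrite logn_fact // /index_iota subn1 /=.
have -> : iota 1 a = iota 1 (a %/ 4) ++ iota (1 + a %/ 4) (a - a %/ 4).
  by rewrite -iotaD; congr iota; lia.
rewrite big_cat /= [X in _ + X]big1_seq ?addn0 // => k /andP[_].
rewrite mem_iota => /andP[hk _]; apply: divn_small.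
apply: leq_trans (ltn_expl _ (prime_gt1 qp)); lia.
Qed.

Lemma geo q z n s : 1 < q -> \sum_(k <- iota s.+1 n) z %/ q ^ k <= z %/ q ^ s.
Proof.
move=> q1; elim: n s => [|n IH] s; first by rewrite big_nil.
rewrite /= big_cons; apply: leq_trans (leq_add (leqnn _) (IH s.+1)) _.
rewrite expnSr divnMA.
have : z %/ q ^ s %/ q <= z %/ q ^ s %/ 2 by apply: leq_div2l.
lia.
Qed.


Lemma cop210 p : prime p -> 7 < p -> coprime p 210.
Proof.
move=> pp p7; rewrite prime_coprime //; apply/negP.
rewrite (_ : 210 = 2 * (3 * (5 * 7))) // !Euclid_dvdM //.
by move=> /orP[|/orP[|/orP[]]] /dvdn_leq => /(_ isT); lia.
Qed.

Lemma powlem X : 1050 <= X -> X.+1 ^ 2 <= 2 ^ (1 + 4 * (X %/ 210)).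
Proof.
move=> hX; set t := X %/ 210.
have ht : 5 <= t by rewrite /t; lia.
have hX1 : X.+1 <= 210 * t.+1 by rewrite /t; lia.
apply: leq_trans (_ : (210 * t.+1) ^ 2 <= _); first by rewrite leq_exp2r.
have e : t = 5 + (t - 5) by lia.
rewrite e; elim: (t - 5) => [|u IH]; first by rewrite addn0; lia.
have e2 : 2 ^ (1 + 4 * (5 + u.+1)) = 16 * 2 ^ (1 + 4 * (5 + u)).
  by rewrite addnS mulnS addnCA expnD.
rewrite e2; move: IH; set w := 2 ^ _; nia.
Qed.

Lemma count_small q a : prime q -> 7 < q -> 1050 * 1050 < a ->
  count (fun k => 0 < a.-1 %/ q ^ k) (iota 1 a) <= 1 + 4 * (a.-1 %/ q %/ 210).
Proof.
move=> qp q7 ha.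
have q0 : 0 < q by lia.
case: (ltnP a.-1 (q * q)) => hq.
  have -> : iota 1 a = 1 :: iota 2 a.-1 by case: (a) ha.
  rewrite /= (eq_in_count (a2 := pred0)) ?count_pred0; first by case: (0 < _).
  move=> k; rewrite mem_iota => /andP[k2 _] /=.
  rewrite divn_gt0 ?expn_gt0 ?q0 //; apply/negbTE; rewrite -ltnNge.
  apply: leq_trans hq _; rewrite -[q * q]/(q ^ 2); exact: leq_pexp2l.
set X := a.-1 %/ q.
have hqX : q <= X by rewrite leq_divRL.
have hX : a.-1 < X.+1 * q by apply: ltn_ceil.
have hXX : X.+1 * q <= X.+1 * X.+1 := leq_mul (leqnn _) (leq_trans hqX (leqnSn _)).
have hX2 : 1050 <= X.
  rewrite leqNgt; apply/negP => hl.
  have : X.+1 * X.+1 <= 1050 * 1050 := leq_mul hl hl.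
  lia.
have hp := @powlem X hX2.
rewrite -size_filter.
apply: leq_trans (_ : size (iota 1 (4 * (X %/ 210))) <= _); last by rewrite size_iota; lia.
apply: uniq_leq_size; first by rewrite filter_uniq // iota_uniq.
move=> k; rewrite mem_filter mem_iota => /andP[hk /andP[k1 _]].
rewrite mem_iota k1 /=.
rewrite divn_gt0 ?expn_gt0 ?q0 // in hk.
have : 2 ^ k < 2 ^ (1 + 4 * (X %/ 210)).
  apply: leq_ltn_trans (_ : 2 ^ k <= q ^ k) _; first by rewrite leq_exp2r; lia.
  apply: leq_ltn_trans hk _; apply: leq_trans hp; rewrite -[X.+1 ^ 2]/(X.+1 * X.+1); lia.
rewrite ltn_exp2l //; lia.
Qed.

Lemma big8 q a : prime q -> 7 < q -> 1050 * 1050 < a ->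
  \sum_(k <- iota 1 a) Ck q a k <= 1 + \sum_(k <- iota 1 a) (a %/ 4) %/ q ^ k.
Proof.
move=> qp q7 ha; have q0 : 0 < q by lia.
have hk : forall k, 0 < k -> Ck q a k + 4 * (a.-1 %/ q ^ k %/ 210) <=
    (0 < a.-1 %/ q ^ k) + (a %/ 4) %/ q ^ k.
  move=> k k0.
  have r210 : q ^ k %% 210 < 210 by rewrite ltn_mod.
  have cr : coprime (q ^ k %% 210) 210 by rewrite coprime_modl coprimeXl // cop210.
  have h1 : Ck q a k <= surv (q ^ k %% 210) (a.-1 %/ q ^ k).
    apply: leq_trans (@Ck_map q a k (fun p => coprime p 210) _ _) _.
    - by rewrite expn_gt0 q0.
    - move=> p pp hd hp0; apply: cop210 => //.
      have := dvdn_leq hp0 hd.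
      have : q <= q ^ k by rewrite -{1}(expn1 q) leq_pexp2l.
      lia.
    rewrite /surv; apply: eq_leq; apply: eq_count => j /=.
    have e : (1 + j * q ^ k) %% 210 = (1 + j * (q ^ k %% 210)) %% 210.
      by rewrite -[LHS]modnDmr -[RHS]modnDmr modnMmr.
    by rewrite -coprime_modl e coprime_modl.
  have h2 := @surv_bound _ (a.-1 %/ q ^ k) r210 cr.
  have h3 : a.-1 %/ q ^ k %/ 4 <= a %/ 4 %/ q ^ k.
    by rewrite -!divnMA mulnC leq_div2r // leq_pred.
  lia.
have hs : \sum_(k <- iota 1 a) Ck q a k + \sum_(k <- iota 1 a) 4 * (a.-1 %/ q ^ k %/ 210)
    <= \sum_(k <- iota 1 a) (0 < a.-1 %/ q ^ k : nat) + \sum_(k <- iota 1 a) (a %/ 4) %/ q ^ k.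
  rewrite -!big_split /= big_seq [X in _ <= X]big_seq; apply: leq_sum => k.
  by rewrite mem_iota => /andP[k1 _]; exact: hk.
have hc := @count_small q a qp q7 ha; rewrite -sum_count0 in hc.
have h1 : 4 * (a.-1 %/ q %/ 210) <= \sum_(k <- iota 1 a) 4 * (a.-1 %/ q ^ k %/ 210).
  have -> : iota 1 a = 1 :: iota 2 a.-1 by case: (a) ha.
  by rewrite big_cons expn1 leq_addr.
lia.
Qed.


Lemma small7 q a : prime q -> q <= 7 -> 2 ^ 21 * 2 ^ 801 <= a ->
  \sum_(k <- iota 1 a) Ck q a k <= 1 + \sum_(k <- iota 1 a) (a %/ 4) %/ q ^ k.
Proof.
move=> qp q7 ha.
have B1 : 1 <= 2 ^ 801 by rewrite expn_gt0.
have hc := @cheb 800 a isT.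
have a5 : 5 <= a by lia.
have hR : (a %/ 4) %/ q <= \sum_(k <- iota 1 a) (a %/ 4) %/ q ^ k.
  have -> : iota 1 a = 1 :: iota 2 a.-1 by case: (a) a5.
  by rewrite big_cons expn1 leq_addr.
have hL : \sum_(k <- iota 1 a) Ck q a k =
    \sum_(k <- iota 1 5) Ck q a k + \sum_(k <- iota 6 (a - 5)) Ck q a k.
  have hI : iota 1 a = iota 1 5 ++ iota 6 (a - 5).
    by rewrite (_ : iota 6 _ = iota (1 + 5) (a - 5)) // -iotaD; congr iota; lia.
  by rewrite hI big_cat.
rewrite hL.
have hC : forall k, Ck q a k <= pic a by move=> k; apply: sub_count => p /andP[].
have hA : \sum_(k <- iota 1 5) Ck q a k <= 5 * pic a.
  rewrite /= !big_cons big_nil.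
  have := hC 1; have := hC 2; have := hC 3; have := hC 4; have := hC 5; lia.
have hB : \sum_(k <- iota 6 (a - 5)) Ck q a k <= a.-1 %/ q ^ 5.
  apply: leq_trans (@geo q a.-1 (a - 5) 5 (prime_gt1 qp)).
  apply: leq_sum => k _.
  apply: leq_trans (@Ck_map q a k predT _ _) _; rewrite ?expn_gt0 ?prime_gt0 //.
  by rewrite count_predT size_iota.
have : q \in [:: 2; 3; 5; 7].
  by move: qp q7; case: (q) => [|[|[|[|[|[|[|[|q']]]]]]]].
rewrite !inE => /or4P[] /eqP eq; subst q; lia.
Qed.


Lemma core q a : prime q -> 2 ^ 21 * 2 ^ 801 <= a -> Ssum q a <= logn q (a %/ 4)`! + 1.
Proof.
move=> qp ha.
apply: leq_trans (@S_le_sumC q a qp) _.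
rewrite addnC; apply: leq_trans _ (leq_add (leqnn 1) (@rhs_le q a qp)).
case: (leqP q 7) => q7. 
 exact: (@small7 q a qp q7 ha).
apply: (@big8 q a qp q7).
have : 1 <= 2 ^ 801 by rewrite expn_gt0.
lia.
Qed.

Lemma S_mono q b c : b <= c -> Ssum q b <= Ssum q c.
Proof.
move=> bc; rewrite /Ssum.
have -> : iota 0 c.+1 = iota 0 b.+1 ++ iota (0 + b.+1) (c - b).
  by rewrite -iotaD; congr iota; lia.
by rewrite big_cat leq_addr.
Qed.

Lemma S_zero q a : prime q -> a < q -> Ssum q a = 0.
Proof.
move=> qp aq; rewrite /Ssum big1_seq // => p /andP[pp].
rewrite mem_iota add0n ltnS => /andP[_ pa].
apply/eqP; rewrite -leqn0 leqNgt logn_gt0 mem_primes qp /=.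
apply/negP => /andP[p0 /dvdn_leq] => /(_ p0); lia.
Qed.

Lemma fact_dvd m n : m <= n -> m`! %| n`!.
Proof. by move=> mn; rewrite -(bin_fact mn) mulnCA dvdn_mulr. Qed.

Lemma main_ineq q a b : prime q -> 0 < a -> a <= b -> 2 ^ 21 * 2 ^ 801 <= a ->
  logn q (totient a`!) + logn q (totient b`!) <= logn q (totient (a + b + (a + b) %/ 8)`!).
Proof.
move=> qp a0 ab ha.
set L := (a + b) %/ 8; set c := a + b + L.
have vTS n : logn q (totient n`!) = Ssum q n + (if q <= n then (logn q n`!).-1 else 0).
  exact: vT.
rewrite !vTS.
have hbc : Ssum q b <= Ssum q c by apply: S_mono; rewrite /c; lia.
have hfact : logn q a`! + logn q b`! + logn q L`! <= logn q c`!.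
  rewrite -!lognM ?muln_gt0 ?fact_gt0 //.
  apply: dvdn_leq_log; first exact: fact_gt0.
  have h1 : a`! * b`! %| (a + b)`!.
    by rewrite -(bin_fact (leq_addr b a)) addKn dvdn_mull.
  have h2 : (a + b)`! * L`! %| c`!.
    by rewrite -(bin_fact (leq_addr L (a + b))) /c addKn dvdn_mull.
  exact: dvdn_trans (dvdn_mul h1 (dvdnn _)) h2.
have hL4 : logn q (a %/ 4)`! <= logn q L`!.
  apply: dvdn_leq_log; first exact: fact_gt0.
  by apply: fact_dvd; rewrite /L; lia.
have hcore := @core q a qp ha.
have hbc2 : logn q b`! <= logn q c`!.
  apply: dvdn_leq_log; first exact: fact_gt0.
  by apply: fact_dvd; rewrite /c; lia.
case: (leqP q a) => hqa.
  have hpos : forall n, q <= n -> 0 < logn q n`!.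
    by move=> n qn; rewrite logn_gt0 mem_primes qp fact_gt0 prime_dvd_fact.
  have := hpos a hqa; have := hpos b (leq_trans hqa ab).
  rewrite (leq_trans hqa ab) (_ : q <= c); last by rewrite /c; lia.
  lia.
rewrite S_zero //.
case: ifP => qb; last by lia.
rewrite (_ : q <= c); last by rewrite /c; lia.
lia.
Qed.

Theorem theorem1p3 :
  exists N : nat, forall a b : nat, 0 < a -> 0 < b -> N <= a -> N <= b ->
    (totient a`! * totient b`!) %| totient (a + b + (a + b) %/ 8)`!.
Proof.
exists (2 ^ 21 * 2 ^ 801) => a b a0 b0 ha hb.
wlog: a b a0 b0 ha hb / a <= b.
  move=> H; case: (leqP a b) => hab; first exact: H.
  rewrite mulnC (addnC a b); apply: H => //; exact: ltnW.
move=> hab.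
have n0 : 0 < totient a`! * totient b`! by rewrite muln_gt0 !totient_gt0 !fact_gt0.
apply/dvdn_partP => // p; rewrite mem_primes => /and3P[pp _ _].
rewrite p_part pfactor_dvdn ?totient_gt0 ?fact_gt0 //.
rewrite lognM ?totient_gt0 ?fact_gt0 //; exact: main_ineq.
Qed.
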